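(* Let $g$ be a function such that for every real $c\geq 1$, every finite graph $G$ with growth $f_G(r)\leq cr$ for all positive integers $r$ has $\operatorname{tw}(G)\leq g(c)$. Then $g(c)\in\Omega(c\log c)$ (as $c\to\infty$).
   Context: $\log$ is the natural logarithm. The growth of a finite graph $G$ is the function $f_G\colon\mathbb{N}\to\mathbb{N}$ where $f_G(r)$ is the maximum of $|V(H)|$ over all subgraphs $H$ of $G$ of radius at most $r$. $\operatorname{tw}(G)$ denotes the treewidth of $G$: the minimum, over tree-decompositions $(B_x: x\in V(T))$ of $G$ (bags indexed by a tree $T$, each edge in some bag, each vertex's bags forming a non-empty subtree), of the maximum bag size minus $1$. *)

(* Defs.v *)
From HB Require Import structures.
From mathcomp Require Import all_boot all_order all_algebra.
From mathcomp Require Import all_classical all_reals all_analysis.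
Set Implicit Arguments. Unset Strict Implicit. Unset Printing Implicit Defensive.
Import Order.TTheory GRing.Theory Num.Theory.

Definition simple_graph (T : finType) (e : rel T) : Prop :=
  symmetric e /\ irreflexive e.

Fixpoint ball (T : finType) (adj : rel T) (v : T) (r : nat) : {set T} :=
  match r with
  | 0 => [set v]
  | r'.+1 => ball adj v r' :|: [set y | [exists x in ball adj v r', adj x y]]
  end.

(* A subgraph H = (S, F) of G: S a vertex subset, F a set of (ordered
   representatives of) edges of G with both ends in S.  Its adjacency is
   the symmetric closure of F. *)
Definition sub_edges (T : finType) (e : rel T) (S : {set T}) (F : {set T * T}) : bool :=
  F \subset [set p | [&& e p.1 p.2, p.1 \in S & p.2 \in S]].

Definition sub_adj (T : finType) (F : {set T * T}) : rel T :=
  fun x y => ((x, y) \in F) || ((y, x) \in F).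

Definition radius_le (T : finType) (S : {set T}) (F : {set T * T}) (r : nat) : bool :=
  [exists v in S, S \subset ball (sub_adj F) v r].

Definition growth (T : finType) (e : rel T) (r : nat) : nat :=
  \max_(S : {set T} | [exists F : {set T * T}, sub_edges e S F && radius_le S F r]) #|S|.

Definition is_tree (I : finType) (t : rel I) : Prop :=
  [/\ symmetric t, irreflexive t, #|I| > 0,
      (forall x y : I, connect t x y) &
      (forall c : seq I, ucycle t c -> size c <= 2)].

Definition tree_decomposition (T : finType) (e : rel T)
    (I : finType) (t : rel I) (B : I -> {set T}) : Prop :=
  [/\ is_tree t,
      (forall u v : T, e u v -> exists x : I, (u \in B x) && (v \in B x)) &
      (forall v : T, (exists x : I, v \in B x) /\
         forall x y : I, v \in B x -> v \in B y ->
           connect [rel a b | [&& t a b, v \in B a & v \in B b]] x y)].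

Definition td_width (T : finType) (I : finType) (B : I -> {set T}) : int :=
  (\max_(x : I) #|B x|)%:Z - 1.

(* "tw(G) <= k": since tw(G) is the minimum width over all tree
   decompositions, tw(G) <= k iff some tree decomposition has width <= k. *)
Definition tw_le (R : realType) (T : finType) (e : rel T) (k : R) : Prop :=
  exists (I : finType) (t : rel I) (B : I -> {set T}),
    tree_decomposition e t B /\ ((td_width B)%:~R <= k)%R.

(* Main.v *)
Require Import Defs.
From HB Require Import structures.
From mathcomp Require Import all_boot all_order all_algebra.
From mathcomp Require Import all_classical all_reals all_analysis.
From mathcomp Require Import all_fingroup zify.
From mathcomp Require Import all_boot.
Import Order.TTheory GRing.Theory Num.Theory.
Set Implicit Arguments. Unset Strict Implicit. Unset Printing Implicit Defensive.

Section TreeFacts.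
Variable I : finType.
Variable t : rel I.
Hypothesis tsym : symmetric t.
Hypothesis tirr : irreflexive t.
Hypothesis tcyc : forall c : seq I, ucycle t c -> size c <= 2.

Lemma no_alt_path (r : rel I) a b :
  subrel r t -> ~~ r a b -> t a b -> connect r a b -> False.
Proof.
move=> rt nrab tab /connectP[p rp bE]; subst b.
case: (shortenP rp) nrab tab => p' rp' up' _ nrab tab.
have := tcyc (c := a :: p'); rewrite /ucycle up' andbT /=.
rewrite rcons_path (sub_path rt rp') /= tsym tab.
case: p' rp' up' nrab tab => [|y [|z q]] /=.
- by rewrite tirr.
- by move=> /andP[-> _].
- by move=> _ _ _ _ /(_ isT).
Qed.

Definition avoid (x : I) : rel I := [rel a b | [&& t a b, a != x & b != x]].
Definition side (x y : I) : {set I} := [set z | connect (avoid x) y z].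

Lemma avoid_sym x : symmetric (avoid x).
Proof. by move=> a b; rewrite /avoid /= [t a b]tsym [(a != x) && _]andbC. Qed.

Lemma side_sym x y z : (z \in side x y) = connect (avoid x) z y.
Proof. by rewrite inE (sym_connect_sym (avoid_sym x)). Qed.

Lemma sides_adj x y : t x y -> [disjoint side x y & side y x].
Proof.
move=> txy; apply/pred0P => z /=; apply/negP => /andP[].
rewrite !inE => cyz cxz.
pose r := [rel u v | [&& t u v, ~~ ((u == x) && (v == y)) & ~~ ((u == y) && (v == x))]].
have rsym : symmetric r.
  move=> u v; rewrite /= [t u v]tsym; congr (_ && _).
  by rewrite andbC [(v == x) && _]andbC [(v == y) && _]andbC.
have sub1 w : subrel (avoid w) r -> forall u v, connect (avoid w) u v -> connect r u v.
  move=> h u0 v0; apply: connect_sub => p q /h; exact: connect1.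
have h1 : subrel (avoid x) r.
  by move=> u v /and3P[tuv /negbTE ux /negbTE vx]; rewrite /= tuv ux vx !andbF.
have h2 : subrel (avoid y) r.
  by move=> u v /and3P[tuv /negbTE ux /negbTE vx]; rewrite /= tuv ux vx !andbF.
apply: (@no_alt_path r x y).
- by move=> u v /andP[].
- by rewrite /r /= !eqxx /= andbF.
- by [].
apply: connect_trans (sub1 _ h2 _ _ cxz) _.
by rewrite (sym_connect_sym rsym); apply: sub1 h1 _ _ cyz.
Qed.

Lemma sides_nb x y y' : t x y -> t x y' -> y != y' ->
  [disjoint side x y & side x y'].
Proof.
move=> txy txy' nyy; apply/pred0P => z /=; apply/negP => /andP[].
rewrite !inE => cyz cyz'.
have cyy' : connect (avoid x) y y'.
  by apply: connect_trans cyz _; rewrite (sym_connect_sym (avoid_sym x)).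
pose r := [rel u v | [&& t u v, ~~ ((u == x) && (v == y')) & ~~ ((u == y') && (v == x))]].
apply: (@no_alt_path r x y').
- by move=> u v /andP[].
- by rewrite /r /= !eqxx /= andbF.
- by [].
have nxy : x != y by apply: contraTneq txy => ->; rewrite tirr.
have rxy : r x y.
  rewrite /r /= txy eqxx (negbTE nyy) [y == x]eq_sym (negbTE nxy).
  by rewrite !andbF.
apply: (@connect_trans _ _ y); first exact: connect1.
apply: connect_sub cyy' => u v /and3P[tuv ux vx]; apply: connect1.
by rewrite /= tuv (negbTE ux) (negbTE vx) !andbF.
Qed.

Lemma path_avoid x y q : path t y q -> x \notin y :: q -> path (avoid x) y q.
Proof.
elim: q y => [|z q IH] y //= /andP[tyz pq]; rewrite !inE negb_or => /andP[xy].
rewrite negb_or => /andP[xz xq]; rewrite /avoid /= tyz eq_sym xy eq_sym xz /=.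
by apply: IH; rewrite // inE negb_or xz.
Qed.

Hypothesis tconn : forall x y : I, connect t x y.

Lemma nb_side x z : z != x -> exists2 y, t x y & z \in side x y.
Proof.
move=> zx; case/connectP: (tconn x z) => p tp zE.
case: (shortenP tp) zE => p' tp' up' _ zE.
case: p' tp' up' zE => [|y q] /=; first by move=> _ _ zE; rewrite zE eqxx in zx.
move=> /andP[txy tq] /andP[xyq _] zE; exists y => //.
rewrite inE; apply/connectP; exists q => //.
by apply: path_avoid.
Qed.

End TreeFacts.

Section Decomp.
Variables (T I : finType) (e : rel T) (t : rel I) (B : I -> {set T}).
Hypothesis td : tree_decomposition e t B.

Definition piece (x y : I) : {set T} :=
  [set v | (v \notin B x) && [exists z, (z \in side t x y) && (v \in B z)]].

Lemma piece_side x y v z : v \in piece x y -> v \in B z -> z \in side t x y.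
Proof.
case: td => _ _ H3; rewrite inE => /andP[vx /existsP[z0 /andP[z0s vz0]]] vz.
have := (H3 v).2 z0 z vz0 vz => c.
rewrite inE in z0s *; rewrite inE; apply: (connect_trans z0s).
apply: connect_sub c => a b /= /and3P[tab va vb]; apply: connect1.
have ax : a != x by apply/eqP => E; rewrite E in va; rewrite va in vx.
have bx : b != x by apply/eqP => E; rewrite E in vb; rewrite vb in vx.
by rewrite /avoid /= tab ax bx.
Qed.

Lemma piece_cover x v : v \notin B x -> exists2 y, t x y & v \in piece x y.
Proof.
case: td => [[tsym tirr _ tconn _]] _ H3 vx.
case: (H3 v) => [[z vz] _].
have zx : z != x by apply: contraNneq vx => <-.
case: (nb_side tconn zx) => y txy zs; exists y => //.
rewrite inE vx /=; apply/existsP; exists z; by rewrite zs vz.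
Qed.

Lemma piece_notB x y v : v \in piece x y -> v \notin B x.
Proof. by rewrite inE => /andP[]. Qed.

End Decomp.

Lemma group_sets (I T : finType) (P : I -> {set T}) (m : nat) : 0 < m ->
  forall Y : {set I}, (forall y, y \in Y -> #|P y| < m) ->
  m <= #|\bigcup_(y in Y) P y| ->
  exists J : {set I}, J \subset Y /\
    (m <= #|\bigcup_(y in J) P y|) && (#|\bigcup_(y in J) P y| < 2 * m).
Proof.
move=> m0 Y; move: {2}#|Y| (leqnn #|Y|) => n; elim: n Y => [|n IH] Y.
  rewrite leqn0 => /eqP/cards0_eq -> _; rewrite big_set0 cards0.
  by rewrite leqNgt m0.
move=> Yn HP Hm.
case: (ltnP #|\bigcup_(y in Y) P y| (2 * m)) => h.
  by exists Y; rewrite subxx Hm h.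
case: (set_0Vmem Y) => [Y0|[y yY]].
  by move: Hm; rewrite Y0 big_set0 cards0 leqNgt m0.
have h1 : #|Y :\ y| <= n by move: Yn; rewrite (cardsD1 y Y) yY.
have h2 : forall z, z \in Y :\ y -> #|P z| < m.
  by move=> z; rewrite inE => /andP[_]; apply: HP.
have h3 : m <= #|\bigcup_(i in Y :\ y) P i|.
  rewrite (big_setD1 y yY) /= in h.
  have := leq_trans h (leq_card_setU _ _); have := HP y yY.
  rewrite mul2n -addnn; move=> a b; rewrite -(leq_add2l #|P y|).
  by apply: (leq_trans _ b); rewrite leq_add2r ltnW.
have [J [JY HJ]] := IH _ h1 h2 h3.
exists J; split => //; exact: (fintype.subset_trans JY (subsetDl _ _)).
Qed.

Lemma fcycle_exists (I : finType) (t : rel I) (f : I -> I) (x0 : I) :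
  irreflexive t -> (forall x, t x (f x)) -> (forall x, f (f x) != x) ->
  exists c, ucycleb t c && (2 < size c).
Proof.
move=> tirr tf nff.
set y := iter (fingraph.order f x0) f x0.
have fy : fconnect f x0 y := fconnect_iter f _ x0.
set i := findex f x0 y.
have ilt : i < fingraph.order f x0 := findex_max fy.
set z := iter i f x0.
have zE : iter (fingraph.order f x0 - i).-1.+1 f z = z.
  rewrite prednK ?subn_gt0 // /z -iterD subnK ?(ltnW ilt) //.
  by rewrite (iter_findex fy).
have cz : fcycle f (fingraph.orbit f z) by apply/(orbitPcycle 0 3); eexists; exact: zE.
exists (fingraph.orbit f z); rewrite /ucycleb orbit_uniq andbT.
rewrite (sub_cycle _ cz) /=; last by move=> a b /eqP <-.
move: cz; rewrite size_orbit /fingraph.orbit.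
case Eo: (fingraph.order f z) => [|[|[|k]]] //.
- by have := fingraph.order_gt0 f z; rewrite Eo.
- by rewrite /= andbT => /eqP fz; have := tf z; rewrite fz tirr.
- by rewrite /= => /and3P[_ /eqP ffz _]; have := nff z; rewrite ffz eqxx.
Qed.

Theorem tw_bag_lower (T I : finType) (e : rel T) (t : rel I) (B : I -> {set T}) (m : nat) :
  tree_decomposition e t B ->
  (forall A C : {set T}, [disjoint A & C] -> m <= #|A| -> m <= #|C| ->
     exists a c, [/\ a \in A, c \in C & e a c]) ->
  exists x, #|T| < #|B x| + 3 * m.
Proof.
move=> td HP.
case: (boolP [exists x, #|T| < #|B x| + 3 * m]) => [/existsP[x hx]|]; first by exists x.
rewrite negb_exists => /forallP Hx; exfalso.
have td' := td; case: td' => [[tsym tirr tI tconn tcyc]] H2 H3.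
have m0 : 0 < m.
  case: (posnP m) => [m0'|//].
  have d0 : [disjoint (finset.set0 : {set T}) & (finset.set0 : {set T})].
    by apply/pred0P => v; rewrite /= inE.
  have c0 : m <= #|(finset.set0 : {set T})| by rewrite m0'.
  have [a [c [] ]] := HP finset.set0 finset.set0 d0 c0 c0.
  by rewrite inE.
have big x : exists y, t x y && (m <= #|piece t B x y|).
  case: (boolP [exists y, t x y && (m <= #|piece t B x y|)]) => [/existsP[y hy]|];
    first by exists y.
  rewrite negb_exists => /forallP H.
  pose Y := [set y | t x y].
  have Hs y : y \in Y -> #|piece t B x y| < m.
    by rewrite inE => txy; have := H y; rewrite txy /= -ltnNge.
  have UE : \bigcup_(y in Y) piece t B x y = ~: B x.
    apply/setP => v; rewrite in_setC; apply/bigcupP/idP => [[y _ vp] | vx].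
      exact: piece_notB vp.
    case: (piece_cover td vx) => y txy vp; exists y => //; by rewrite /Y inE.
  have cB : 3 * m <= #|~: B x|.
    by have := Hx x; rewrite -leqNgt -(cardsC (B x)) leq_add2l.
  have hU : m <= #|\bigcup_(y in Y) piece t B x y|.
    by rewrite UE (leq_trans _ cB) // leq_pmull.
  have [J [JY /andP[HJ1 HJ2]]] := group_sets m0 Hs hU.
  set U := \bigcup_(y in J) piece t B x y in HJ1 HJ2.
  set C := ~: B x :\: U.
  have cC : m <= #|C|.
    rewrite cardsD; have : #|~: B x :&: U| <= #|U| by rewrite subset_leq_card ?subsetIr.
    move=> h; rewrite leq_subRL; last by rewrite subset_leq_card ?subsetIl.
    apply: leq_trans cB; apply: leq_trans (leq_add h (leqnn m)) _.
    by move: HJ2; lia.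
  have dUC : [disjoint U & C].
    by apply/pred0P => v; rewrite /= /C !inE; case: (v \in U); rewrite ?andbF.
  have [a [c [aU cC' eac]]] := HP U C dUC HJ1 cC.
  case/bigcupP: aU => y yJ ay.
  move: cC'; rewrite /C !inE => /andP[cU cx].
  case: (piece_cover td cx) => y' txy' cy'.
  have y'J : y' \notin J by apply: contra cU => yJ'; apply/bigcupP; exists y'.
  have nyy : y != y' by apply: contraNneq y'J => <-.
  have txy : t x y by have := subsetP JY y yJ; rewrite inE.
  case: (H2 a c eac) => z /andP[az cz].
  have s1 := piece_side td ay az; have s2 := piece_side td cy' cz.
  have := sides_nb tsym tirr tcyc txy txy' nyy.
  by move/pred0P/(_ z); rewrite /= s1 s2.
pose f x := odflt x [pick y | t x y && (m <= #|piece t B x y|)].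
have fP x : t x (f x) && (m <= #|piece t B x (f x)|).
  rewrite /f; case: pickP => [y //|H]; case: (big x) => y hy.
  by rewrite H in hy.
have nff x : f (f x) != x.
  apply/eqP => E; have /andP[txy pxy] := fP x; have := fP (f x).
  rewrite E => /andP[tyx pyx].
  have sd := sides_adj tsym tirr tcyc txy.
  have dP : [disjoint piece t B x (f x) & piece t B (f x) x].
    apply/pred0P => v /=; apply/negP => /andP[v1 v2].
    move: (v1); rewrite inE => /andP[_ /existsP[z /andP[zs vz]]].
    have zs' := piece_side td v2 vz.
    by move/pred0P/(_ z): sd; rewrite /= zs zs'.
  have [a [c [a1 c2 eac]]] := HP _ _ dP pxy pyx.
  case: (H2 a c eac) => z /andP[az cz].
  have s1 := piece_side td a1 az; have s2 := piece_side td c2 cz.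
  by move/pred0P/(_ z): sd; rewrite /= s1 s2.
case/card_gt0P: tI => x0 _.
have [c /andP[uc sc]] := fcycle_exists x0 tirr (fun x => (andP (fP x)).1) nff.
by have := tcyc c uc; rewrite leqNgt sc.
Qed.

Section Perms.
Variable T : finType.

Lemma perm_move_base (C C' : {set T}) : C \subset C' -> #|C| = #|C'| ->
  exists tau : {perm T}, tau @: C = C'.
Proof.
move=> sub eqc; exists (1%g); apply/eqP; rewrite eqEcard card_imset ?eqc ?leqnn;
  last exact: perm_inj.
rewrite andbT; apply/subsetP => _ /imsetP[x xC ->]; rewrite perm1.
exact: subsetP sub x xC.
Qed.

Lemma perm_move (C C' : {set T}) : #|C| = #|C'| -> exists tau : {perm T}, tau @: C = C'.
Proof.
move: {2}#|C :\: C'| (leqnn #|C :\: C'|) => k; elim: k C => [|k IH] C.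
  rewrite leqn0 cards_eq0 setD_eq0; exact: perm_move_base.
move=> hk eqc.
case: (set_0Vmem (C :\: C')) => [E|[c cD]].
  by apply: perm_move_base => //; rewrite -setD_eq0 E.
have cc' : 0 < #|C' :\: C|.
  move: eqc; rewrite -(cardsID C' C) -(cardsID C C') setIC => /addnI <-.
  by apply/card_gt0P; exists c.
case/card_gt0P: cc' => c' c'D.
move: cD c'D; rewrite !inE => /andP[cC' cC] /andP[c'C c'C'].
pose D := tperm c c' @: C.
have cardD : #|D| = #|C'| by rewrite card_imset ?eqc //; exact: perm_inj.
have hD : #|D :\: C'| <= k.
  have sub : D :\: C' \subset (C :\: C') :\ c.
    apply/subsetP => _ /setDP[/imsetP[x xC ->] nC].
    have [xc|xc] := eqVneq x c.
      by move: nC; rewrite xc tpermL c'C'.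
    have xc' : c' != x by apply: contraNneq c'C => ->.
    have cx : c != x by rewrite eq_sym.
    move: nC; rewrite (tpermD cx xc') => nC.
    by rewrite !inE xc nC xC.
  apply: leq_trans (subset_leq_card sub) _.
  move: hk; rewrite (cardsD1 c (C :\: C')) !inE cC cC' /=.
  by rewrite add1n ltnS.
have [tau' Etau] := IH D hD cardD.
exists (tperm c c' * tau')%g; rewrite -Etau /D -imset_comp.
by apply: eq_imset => x /=; rewrite permM.
Qed.

Definition Sset (A C : {set T}) := [set p : {perm T} | [disjoint p @: A & C]].

Lemma Sset_le (A C C' : {set T}) : #|C| = #|C'| -> #|Sset A C| <= #|Sset A C'|.
Proof.
move=> eqc; have [tau Etau] := perm_move eqc.
rewrite -(card_imset (Sset A C) (@mulIg _ tau)).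
apply: subset_leq_card; apply/subsetP => _ /imsetP[p pS ->].
move: pS; rewrite !inE -Etau.
have -> : (p * tau)%g @: A = tau @: (p @: A).
  by rewrite -imset_comp; apply: eq_imset => x; rewrite permM.
by rewrite imset_disjoint //; exact: perm_inj.
Qed.

Lemma Sset_sum (A : {set T}) (m : nat) :
  \sum_(C in [set C : {set T} | #|C| == m]) #|Sset A C| =
  #|{perm T}| * 'C(#|T| - #|A|, m).
Proof.
transitivity (\sum_(C in [set C : {set T} | #|C| == m]) \sum_(p : {perm T}) (if p \in Sset A C then 1 else 0)).
  apply: eq_bigr => C _; rewrite -sum1_card big_mkcond /=.
  by apply: eq_bigr => p _.
rewrite exchange_big /= -sum_nat_const; apply: eq_bigr => p _.
rewrite -big_mkcondr /= sum1dep_card.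
have -> : [set x : {set T} | (x \in [set C : {set T} | #|C| == m]) && (p \in Sset A x)] =
          [set C : {set T} | C \subset ~: (p @: A) & #|C| == m].
  apply/setP => C; rewrite !inE disjoint_sym disjoints_subset andbC.
  by [].
rewrite cards_draws; congr 'C(_, _).
have := cardsC (p @: A); rewrite card_imset; last exact: perm_inj.
by move=> <-; rewrite addKn.
Qed.

Lemma Sset_const (A C : {set T}) (m : nat) : #|C| = m ->
  #|Sset A C| * 'C(#|T|, m) = #|{perm T}| * 'C(#|T| - #|A|, m).
Proof.
move=> cm; rewrite -Sset_sum -card_draws mulnC -sum_nat_const.
apply: eq_bigr => C' /[!inE] /eqP c'm.
by apply/eqP; rewrite eqn_leq !Sset_le // cm c'm.
Qed.

End Perms.

Lemma ffact_ratio m j : j <= m -> 6 ^ j * (5 * m) ^_ j <= 5 ^ j * (6 * m) ^_ j.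
Proof.
elim: j => [|j IH] hj; first by rewrite !ffactn0.
rewrite !ffactnSr !expnS.
have h1 := IH (ltnW hj).
have h2 : 6 * (5 * m - j) <= 5 * (6 * m - j) by lia.
move: (leq_mul h1 h2).
move: (6 ^ j) (5 ^ j) ((5 * m) ^_ j) ((6 * m) ^_ j) (5 * m - j) (6 * m - j) => a b c d u v.
nia.
Qed.

Lemma bin_ratio m : 6 ^ m * 'C(5 * m, m) <= 5 ^ m * 'C(6 * m, m).
Proof.
rewrite -(leq_pmul2r (fact_gt0 m)) -!mulnA !bin_ffact.
exact: ffact_ratio.
Qed.

Lemma card_bigcup_le (I T : finType) (P : {pred I}) (F : I -> {set T}) :
  #|\bigcup_(i in P) F i| <= \sum_(i in P) #|F i|.
Proof.
elim/big_rec2: _ => [|i n U _ h]; first by rewrite cards0.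
apply: leq_trans (leq_card_setU _ _) _; by rewrite leq_add2l.
Qed.

Lemma num_ineq m : 0 < m -> 2 ^ (6 * m) * 2 ^ (6 * m) * 5 ^ (m * 48) < 6 ^ (m * 48).
Proof.
move=> m0.
have E48 : 48 = 4 * 12 by [].
have e1 : 2 ^ (6 * m) * 2 ^ (6 * m) = (2 ^ 12) ^ m.
  by rewrite -expnD -expnM; congr (_ ^ _); lia.
have e2 a : a ^ (m * (4 * 12)) = ((a ^ 4) ^ 12) ^ m.
  by rewrite -!expnM; congr (_ ^ _); lia.
rewrite e1 E48 !e2 -expnMn (ltn_exp2r _ _ m0) -expnMn.
have h12 : 0 < 12 by [].
rewrite (ltn_exp2r _ _ h12).
by [].
Qed.

Lemma good_perms (T : finType) (m : nat) : 0 < m -> #|T| = 6 * m ->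
  exists s : {ffun 'I_48 -> {perm T}}, forall A C : {set T},
    #|A| = m -> #|C| = m -> exists i, ~~ [disjoint s i @: A & C].
Proof.
move=> m0 nT.
pose Am := [set C : {set T} | #|C| == m].
pose FS (A C : {set T}) := [set s : {ffun 'I_48 -> {perm T}} | [forall i, s i \in Sset A C]].
pose bad := \bigcup_(A in Am) \bigcup_(C in Am) FS A C.
pose P := #|{perm T}|.
have P0 : 0 < P by apply/card_gt0P; exists 1%g.
have cFS A C : #|FS A C| = #|Sset A C| ^ 48.
  have := card_ffun_on 'I_48 (Sset A C); rewrite card_ord => <-; apply: eq_card => s.
  by rewrite inE; apply/forallP/ffun_onP.
set X := 'C(6 * m, m); set Y := 'C(5 * m, m).
have X0 : 0 < X by rewrite bin_gt0 leq_pmull.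
have hS A C : A \in Am -> C \in Am -> #|Sset A C| * X = P * Y.
  rewrite !inE => /eqP cA /eqP cC.
  rewrite /X /Y -nT Sset_const // cA nT; congr (_ * 'C(_, _)); lia.
have cAm : #|Am| <= 2 ^ (6 * m).
  rewrite -nT -cardsT -card_powerset; apply: subset_leq_card.
  by apply/subsetP => C _; rewrite powersetE subsetT.
have cbad : #|bad| < P ^ 48.
  apply: leq_ltn_trans (card_bigcup_le _ _) _.
  apply: (@leq_ltn_trans (\sum_(A in Am) \sum_(C in Am) #|Sset A C| ^ 48)).
    apply: leq_sum => A _; apply: leq_trans (card_bigcup_le _ _) _.
    by apply: leq_sum => C _; rewrite cFS.
  have X48 : 0 < X ^ 48 by rewrite expn_gt0 X0.
  have S48 : 0 < 6 ^ (m * 48) by rewrite expn_gt0.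
  rewrite -(ltn_pmul2r X48) -(ltn_pmul2r S48).
  rewrite big_distrl /=.
  rewrite (eq_bigr (fun _ => #|Am| * (P * Y) ^ 48)); last first.
    move=> A Am'; rewrite big_distrl /= -sum_nat_const; apply: eq_bigr => C Cm.
    by rewrite -expnMn hS.
  rewrite sum_nat_const expnMn.
  have F1 : #|Am| * #|Am| <= 2 ^ (6 * m) * 2 ^ (6 * m) by apply: leq_mul.
  have F2 : 6 ^ (m * 48) * Y ^ 48 <= 5 ^ (m * 48) * X ^ 48.
    by rewrite !expnM -!expnMn leq_exp2r // bin_ratio.
  have F3 := num_ineq m0.
  have px : 0 < P ^ 48 * X ^ 48 by rewrite muln_gt0 X48 expn_gt0 P0.
  move: F1 F2 F3 px.
  move: #|Am| (2 ^ (6 * m)) (P ^ 48) (Y ^ 48) (X ^ 48) (6 ^ (m * 48)) (5 ^ (m * 48)).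
  move=> a q p y x s f F1 F2 F3 px.
  have G1 := leq_mul F1 (leqnn (p * (y * s))).
  have G2 := leq_mul (leqnn (q * q * p)) F2.
  have G3 : q * q * f * (p * x) < s * (p * x) by rewrite ltn_pmul2r.
  nia.
have [E|[s sb]] := set_0Vmem (~: bad).
  have : #|bad| = #|{ffun 'I_48 -> {perm T}}|.
    have bT : bad = setT.
      by apply/setP => s; rewrite inE; apply/negP => /negP; rewrite -in_setC E inE.
    by rewrite bT cardsT.
  by rewrite card_ffun card_ord => Eb; rewrite Eb ltnn in cbad.
exists s => A C cA cC.
move: sb; rewrite inE => /bigcupP-nb.
case: (boolP [forall i, s i \in Sset A C]) => [H|].
  by exfalso; apply: nb; exists A; rewrite ?inE ?cA //; apply/bigcupP; exists C;
    rewrite ?inE ?cC.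
by rewrite negb_forall => /existsP[i]; rewrite inE => H; exists i.
Qed.

Section GrowthBounds.
Variable T : finType.

Lemma ball_mono (adj1 adj2 : rel T) v r : subrel adj1 adj2 ->
  Defs.ball adj1 v r \subset Defs.ball adj2 v r.
Proof.
move=> sub; elim: r => [|r IH] //=.
apply/subsetP => y; rewrite !inE => /orP[h|/existsP[x /andP[xb axy]]].
  by rewrite (subsetP IH y h).
apply/orP; right; apply/existsP; exists x; rewrite (subsetP IH x xb).
exact: sub.
Qed.

Lemma ball_card (adj : rel T) D v r : (forall x, #|[set y | adj x y]| <= D) ->
  #|Defs.ball adj v r| <= D.+1 ^ r.
Proof.
move=> hD; elim: r => [|r IH] /=; first by rewrite cards1.
set X := Defs.ball adj v r in IH *.
have sub : [set y | [exists x in X, adj x y]] \subset \bigcup_(x in X) [set y | adj x y].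
  apply/subsetP => y; rewrite inE => /existsP[x /andP[xX axy]].
  by apply/bigcupP; exists x; rewrite ?inE.
have h1 : #|[set y | [exists x in X, adj x y]]| <= #|X| * D.
  apply: leq_trans (subset_leq_card sub) _.
  apply: leq_trans (card_bigcup_le _ _) _.
  by rewrite -sum_nat_const; apply: leq_sum => x _.
apply: leq_trans (leq_card_setU _ _) _.
rewrite expnS mulSn; apply: leq_add => //.
apply: leq_trans h1 _; rewrite mulnC; exact: leq_mul.
Qed.

Lemma growth_le (e : rel T) D r : symmetric e ->
  (forall x, #|[set y | e x y]| <= D) ->
  growth e r <= minn (D.+1 ^ r) #|T|.
Proof.
move=> esym hD; apply/bigmax_leqP => S /existsP[F /andP[sF /existsP[v /andP[vS Sb]]]].
rewrite leq_min max_card andbT.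
apply: leq_trans (subset_leq_card Sb) _.
apply: leq_trans (subset_leq_card (ball_mono _ _ _)) (ball_card _ _ hD).
move=> x y; rewrite /sub_adj => /orP[] h; have := subsetP sF _ h; rewrite inE /=.
  by case/and3P.
by case/and3P => eyx _ _; rewrite esym.
Qed.

End GrowthBounds.

Definition pgraph (T : finType) (s : {ffun 'I_48 -> {perm T}}) : rel T :=
  fun u v => (u != v) && [exists i, (s i u == v) || (s i v == u)].

Lemma pgraph_simple (T : finType) (s : {ffun 'I_48 -> {perm T}}) :
  simple_graph (pgraph s).
Proof.
split.
  move=> u v; rewrite /pgraph eq_sym; congr (_ && _).
  by apply: eq_existsb => i; rewrite orbC.
by move=> u; rewrite /pgraph eqxx.
Qed.

Lemma pgraph_deg (T : finType) (s : {ffun 'I_48 -> {perm T}}) x :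
  #|[set y | pgraph s x y]| <= 96.
Proof.
have sub : [set y | pgraph s x y] \subset
   [set s i x | i : 'I_48] :|: [set (s i)^-1%g x | i : 'I_48].
  apply/subsetP => y; rewrite inE => /andP[_ /existsP[i /orP[] /eqP h]].
    by rewrite inE; apply/orP; left; apply/imsetP; exists i.
  rewrite inE; apply/orP; right; apply/imsetP; exists i => //.
  by rewrite -h permK.
apply: leq_trans (subset_leq_card sub) _.
apply: leq_trans (leq_card_setU _ _) _.
rewrite -[96]/(48 + 48); apply: leq_add;
  by apply: leq_trans (leq_imset_card _ _) _; rewrite card_ord.
Qed.

Lemma pgraph_P (T : finType) (m : nat) (s : {ffun 'I_48 -> {perm T}}) :
  (forall A C : {set T}, #|A| = m -> #|C| = m -> exists i, ~~ [disjoint s i @: A & C]) ->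
  forall A C : {set T}, [disjoint A & C] -> m <= #|A| -> m <= #|C| ->
     exists a c, [/\ a \in A, c \in C & pgraph s a c].
Proof.
move=> good A C dAC hA hC.
case/card_geqP: hA => sa [ua sza sba].
case/card_geqP: hC => sc [uc szc sbc].
have ca : #|[set x in sa]| = m by rewrite cardsE (card_uniqP ua).
have cc : #|[set x in sc]| = m by rewrite cardsE (card_uniqP uc).
have [i] := good _ _ ca cc.
case/pred0Pn => _ /andP[/imsetP[a aA ->] ac].
rewrite inE in aA ac; rewrite /= inE in ac.
exists a, (s i a); split; [exact: sba | exact: sbc |].
rewrite /pgraph; apply/andP; split.
  apply/eqP => E; move/pred0P: dAC => /(_ a) /=.
  by rewrite (sba _ aA) E (sbc _ ac).
by apply/existsP; exists i; rewrite eqxx.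
Qed.

Lemma growth_nat L r : (0 < L)%N -> (0 < r)%N ->
  (minn (97 ^ r) (6 * 97 ^ L) * L <= 6 * 97 ^ L * r)%N.
Proof.
move=> L0 r0; case: (leqP r L) => hrL.
  have h1 : (L - r).+1 <= 97 ^ (L - r) by apply: ltn_expl.
  have h2 : L <= r * 97 ^ (L - r).
    apply: leq_trans (leq_mul (leqnn r) h1); nia.
  have e : 97 ^ L = 97 ^ (L - r) * 97 ^ r by rewrite -expnD subnK.
  have G1 := leq_mul (geq_minl (97 ^ r) (6 * 97 ^ L)) (leqnn L).
  have G2 := leq_mul (leqnn (97 ^ r)) h2.
  move: G1 G2; rewrite e.
  set w := minn _ _; set v := 97 ^ r; set u := 97 ^ (L - r).
  clearbody w v u => G1 G2; nia.
apply: leq_trans (leq_mul (geq_minr _ _) (leqnn L)) _.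
by rewrite leq_mul2l ltnW // orbT.
Qed.

Lemma graph_family L : (0 < L)%N -> exists (T : finType) (e : rel T),
  [/\ simple_graph e,
      forall r, (0 < r)%N -> (growth e r * L <= 6 * 97 ^ L * r)%N &
      forall (I : finType) (t : rel I) (B : I -> {set T}),
        tree_decomposition e t B -> (3 * 97 ^ L < \max_(x : I) #|B x|)%N].
Proof.
move=> L0.
have m0 : (0 < 97 ^ L)%N by rewrite expn_gt0.
have [s good] := @good_perms 'I_(6 * 97 ^ L) (97 ^ L) m0 (card_ord _).
exists 'I_(6 * 97 ^ L), (pgraph s); split.
- exact: pgraph_simple.
- move=> r r0.
  have := @growth_le _ (pgraph s) 96 r (pgraph_simple s).1 (@pgraph_deg _ s).
  rewrite card_ord => h.
  exact: leq_trans (leq_mul h (leqnn L)) (growth_nat L0 r0).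
- move=> I t B td.
  have [x hx] := tw_bag_lower td (pgraph_P good).
  rewrite card_ord in hx.
  apply: leq_trans (leq_bigmax x); lia.
Qed.

Local Open Scope ring_scope.

Lemma nat_sq_le N : (N * N <= 6 * 97 ^ N)%N.
Proof.
elim: N => [|N IH] //.
have h : (N < 97 ^ N)%N by apply: ltn_expl.
rewrite expnS; nia.
Qed.

From mathcomp Require Import all_algebra all_classical all_reals all_analysis.
From mathcomp Require Import ring lra.
Import Order.TTheory GRing.Theory Num.Theory.
Local Open Scope ring_scope.
Unset Implicit Arguments.

Theorem theorem8 (R : realType) (g : R -> R) :
  (forall c : R, 1 <= c ->
     forall (T : finType) (e : rel T), simple_graph e ->
       (forall r : nat, (0 < r)%N -> (growth e r)%:R <= c * r%:R) ->
       tw_le e (g c)) ->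
  exists K : R, 0 < K /\
    exists c0 : R, forall c : R, c0 <= c -> K * (c * ln c) <= g c.
Proof.
move=> H.
have l97 : 0 < ln (97 : R) by apply: ln_gt0; rewrite ltr1n.
have p388 : (0 : R) < 388 by rewrite ltr0n.
exists (388 * ln 97)^-1; split; first by rewrite invr_gt0 (mulr_gt0 p388 l97).
exists (6 * 97)%:R => c hc.
have c1 : 1 <= c by apply: le_trans hc; rewrite ler1n.
have c0 : 0 < c by apply: lt_le_trans c1.
pose P := fun L : nat => (0 < L)%N && (c * L%:R < (6 * 97 ^ L)%:R).
have exP : exists L, P L.
  have := archi_boundP (ltW c0); set N := Num.Def.archi_bound c => hN.
  exists N.+1; rewrite /P /=.
  apply: (lt_le_trans (y := N.+1%:R * N.+1%:R)).
    by rewrite ltr_pM2r ?ltr0Sn //; apply: lt_le_trans hN _; rewrite ler_nat.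
  by rewrite -natrM ler_nat nat_sq_le.
case: (ex_minnP exP) => L /andP[L0 PL] Lmin.
have L1 : (1 < L)%N.
  rewrite ltn_neqAle L0 andbT; apply/eqP => E; rewrite -E in PL.
  by move: PL; rewrite mulr1 expn1 ltNge hc.
set L' := L.-1.
have L'0 : (0 < L')%N by rewrite /L' -ltnS prednK.
have LE : L = L'.+1 by rewrite /L' prednK.
have nPL' : (6 * 97 ^ L')%:R <= c * L'%:R.
  case: (boolP (P L')) => [hP|]; first by have := Lmin _ hP; rewrite LE ltnn.
  by rewrite /P L'0 /= -leNgt.
have [T [e [se gr tw]]] := graph_family L'0.
have hg : forall r : nat, (0 < r)%N -> (growth e r)%:R <= c * r%:R.
  move=> r r0; have := gr r r0; rewrite -(ler_nat R) !natrM => h.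
  have L'r : 0 < (L'%:R : R) by rewrite ltr0n.
  rewrite -(ler_pM2r L'r); apply: le_trans h _.
  have r0' : 0 <= (r%:R : R) by rewrite ler0n.
  move: nPL'; rewrite natrM => hA; nra.
have [I [t [B [td hw]]]] := H c c1 T e se hg.
have hmax := tw I t B td.
set M := (\max_(x : I) #|B x|)%N in hmax.
have gc : (3 * 97 ^ L')%:R <= g c.
  apply: le_trans hw; rewrite /td_width -/M.
  rewrite intrB /= lerBrDr. change ((1%:Z)%:~R) with (1 : R). change ((M%:Z)%:~R) with (M%:R : R).
  by rewrite natr1 ler_nat.
set X := ln (97 : R).
set A := ((97 ^ L')%N)%:R : R.
have A0 : 0 <= A by rewrite ler0n.
have t2 : c * L%:R <= (6 * 97)%:R * A.
  by apply: ltW; move: PL; rewrite LE expnS mulnA natrM -LE.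
have gc' : 3 * A <= g c by move: gc; rewrite natrM.
have lc : ln c <= (L.+1)%:R * X.
  have h1 : c <= ((97 ^ L.+1)%N)%:R.
    have cL : c <= c * L%:R by rewrite ler_peMr ?(ltW c0) // ler1n.
    have h6 : ((6 * 97 ^ L)%N)%:R <= ((97 ^ L.+1)%N)%:R :> R.
      by rewrite ler_nat expnS leq_mul2r orbT.
    exact: le_trans cL (le_trans (ltW PL) h6).
  rewrite mulr_natl /X -lnXn ?ltr0n // -natrX.
  by rewrite ler_ln ?posrE ?ltr0n ?expn_gt0.
have s2 : (L.+1)%:R <= 2 * (L%:R) :> R.
  have h : (L.+1 <= 2 * L)%N by rewrite mul2n -addnn -addn1 leq_add2l.
  by move: h; rewrite -(ler_nat R) natrM.
have t1 : c * ln c <= 2 * X * (c * L%:R).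
  have u2 : (L.+1)%:R * X <= (2 * L%:R) * X := ler_wpM2r (ltW l97) s2.
  have u3 : c * ((L.+1)%:R * X) <= c * ((2 * L%:R) * X) := ler_wpM2l (ltW c0) u2.
  have -> : 2 * X * (c * L%:R) = c * ((2 * L%:R) * X) by ring.
  exact: le_trans (ler_wpM2l (ltW c0) lc) u3.
have key : c * ln c <= 388 * X * g c.
  apply: le_trans t1 _.
  have e582 : ((6 * 97)%:R : R) = 582 by [].
  rewrite e582 in t2.
  have p2 : (0 : R) <= 2 by rewrite ler0n.
  have X2 : 0 <= 2 * X := mulr_ge0 p2 (ltW l97).
  have X388 : 0 <= 388 * X := mulr_ge0 (ltW p388) (ltW l97).
  apply: le_trans (ler_wpM2l X2 t2) _.
  have -> : 2 * X * (582 * A) = 388 * X * (3 * 97 ^ L')%:R by rewrite natrM; ring.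
  by rewrite ler_pM2l ?(mulr_gt0 p388 l97).
rewrite mulrC ler_pdivrMr; last exact: mulr_gt0 p388 l97.
by rewrite [g c * _]mulrC.
Qed.
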